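(* In the setting of the context, fix $k$ and assume that the MHDM iterate $x_k$ minimizes $x\mapsto\frac{\lambda_k}{2}\|Tx-f\|^2+J(x)$. Let $u_{k+1}=x_{k+1}-x_k$ and $\xi_{k+1}=\lambda_{k+1}T^*(f-Tx_{k+1})\in\partial J(u_{k+1})$. Then $x_{k+1}$ minimizes $x\mapsto\frac{\lambda_{k+1}}{2}\|Tx-f\|^2+J(x)$ if and only if $$J(u_{k+1})-J(x_{k+1})-\langle\xi_{k+1},u_{k+1}-x_{k+1}\rangle=0 .$$
   Context: $X$ Banach, $H$ Hilbert, $T\in\mathcal L(X,H)$, $f\in H$, $J:X\to[0,\infty]$ a seminorm ($J(\alpha x)=|\alpha|J(x)$, $J(x+y)\le J(x)+J(y)$) such that the relevant Tikhonov-type functionals have minimizers, $(\lambda_k)$ an increasing sequence of positive parameters. MHDM: $x_0\in\arg\min_x\frac{\lambda_0}{2}\|Tx-f\|^2+J(x)$, and for $k\ge1$, $x_k\in\arg\min_x\frac{\lambda_k}{2}\|Tx-f\|^2+J(x-x_{k-1})$. Subgradient $\partial J(x_0)=\{x^*\in X^*:\langle x^*,x-x_0\rangle\le J(x)-J(x_0)\ \forall x\}$. *)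

(* Defs.v *)
From HB Require Import structures.
From mathcomp Require Import all_boot all_order all_algebra.
From mathcomp Require Import all_classical all_reals all_analysis.
Set Implicit Arguments. Unset Strict Implicit. Unset Printing Implicit Defensive.
Import Order.TTheory GRing.Theory Num.Theory.
Import numFieldNormedType.Exports.
Local Open Scope ring_scope.

(* ip is a real inner product on H inducing the norm of H
   (so a completeNormedModType H with such an ip is a real Hilbert space). *)
Definition is_inner_product {R : realType} {H : normedModType R}
  (ip : H -> H -> R) : Prop :=
  [/\ (forall x y, ip x y = ip y x),
      (forall a x y z, ip (a *: x + y) z = a * ip x z + ip y z),
      (forall x, 0 <= ip x x),
      (forall x, ip x x = 0 -> x = 0)
    & (forall x, `|x| ^+ 2 = ip x x)].

Definition ext_seminorm {R : realType} {X : normedModType R}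
  (J : X -> \bar R) : Prop :=
  [/\ (forall x : X, (0 <= J x)%E),
      (forall (a : R) x, J (a *: x) = (`|a|%:E * J x)%E)
    & (forall x y : X, (J (x + y)%R <= J x + J y)%E)].

Definition is_minimizer {T : Type} {R : realType} (F : T -> \bar R) (x0 : T) : Prop :=
  forall x, (F x0 <= F x)%E.

Definition tikhonov {R : realType} {X H : normedModType R}
  (T : X -> H) (f : H) (J : X -> \bar R) (lam : R) (x : X) : \bar R :=
  ((lam / 2 * `|T x - f| ^+ 2)%:E + J x)%E.

Definition is_MHDM {R : realType} {X H : normedModType R}
  (T : X -> H) (f : H) (J : X -> \bar R) (lam : nat -> R) (x : nat -> X) : Prop :=
  is_minimizer (tikhonov T f J (lam 0%N)) (x 0%N) /\
  forall k : nat, is_minimizer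
    (fun y => ((lam k.+1 / 2 * `|T y - f| ^+ 2)%:E + J (y - x k)%R)%E) (x k.+1).

(* Main.v *)
Require Import Defs.
From HB Require Import structures.
From mathcomp Require Import all_boot all_order all_algebra.
From mathcomp Require Import all_classical all_reals all_analysis.
From mathcomp Require Import ring lra.
Import Order.TTheory GRing.Theory Num.Theory.
Import numFieldNormedType.Exports.
Local Open Scope ring_scope.
Set Implicit Arguments.

Section Helpers.
Variables (R : realType) (H : normedModType R) (ip : H -> H -> R).
Hypothesis hip : is_inner_product ip.

Lemma ip0l z : ip 0 z = 0.
Proof. case: hip => _ hl _ _ _. have := hl 1 0 0 z. rewrite scale1r addr0 mul1r. lra. Qed.

Lemma ipDl x y z : ip (x + y) z = ip x z + ip y z.
Proof. case: hip => _ hl _ _ _. by rewrite -[x]scale1r hl mul1r scale1r. Qed.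

Lemma ipZl a x z : ip (a *: x) z = a * ip x z.
Proof. case: hip => _ hl _ _ _. by rewrite -[a *: x]addr0 hl ip0l addr0. Qed.

Lemma ipDr x y z : ip z (x + y) = ip z x + ip z y.
Proof. case: hip => hs _ _ _ _. by rewrite hs ipDl (hs x) (hs y). Qed.

Lemma ipZr a x z : ip z (a *: x) = a * ip z x.
Proof. case: hip => hs _ _ _ _. by rewrite hs ipZl (hs x). Qed.

Lemma ipNl x z : ip (- x) z = - ip x z.
Proof. by rewrite -scaleN1r ipZl mulN1r. Qed.

Lemma ipNr x z : ip z (- x) = - ip z x.
Proof. by rewrite -scaleN1r ipZr mulN1r. Qed.

Lemma sqnD v w : `|v + w| ^+ 2 = `|v| ^+ 2 + 2 * ip v w + `|w| ^+ 2.
Proof.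
case: hip => hs _ _ _ hn. rewrite !hn ipDl !ipDr (hs w v); ring.
Qed.

End Helpers.

Lemma approx_le (R : realType) (a b K : R) :
  0 <= K -> (forall t, 0 < t -> t < 1 -> a <= b + t * K) -> a <= b.
Proof.
move=> hK h. rewrite leNgt; apply/negP => hba.
set d := a - b.
have hd : 0 < d by rewrite /d subr_gt0.
set t := d / (2 * (d + K)).
have hdK : 0 < d + K by lra.
have ht : t * (d + K) * 2 = d by rewrite /t; field; lra.
have t0 : 0 < t by rewrite /t divr_gt0 //; lra.
have t1 : t < 1 by rewrite /t ltr_pdivrMr ?mul1r; lra.
have tK : 0 <= t * K by rewrite mulr_ge0 //; lra.
have td : 0 < t * d by rewrite mulr_gt0.
have e : t * K * 2 = d - t * d * 2 by rewrite -{1}ht; ring.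
have := h t t0 t1. move: e td. move: (t * d) (t * K) => td tk. rewrite /d. lra.
Qed.

Section Core.
Variables (R : realType) (X H : normedModType R) (ip : H -> H -> R)
  (T : {linear X -> H}) (f : H) (J : X -> \bar R) (lam : R).
Hypothesis hip : is_inner_product ip.
Hypothesis hJ : ext_seminorm J.
Hypothesis hlam : 0 < lam.

Lemma J0 : J 0 = 0%E.
Proof. case: hJ => _ hZ _. by rewrite -(scale0r (0 : X)) hZ normr0 mul0e. Qed.

Lemma core (c y : X) :
  is_minimizer (fun x => ((lam / 2 * `|T x - f| ^+ 2)%:E + J (x - c)%R)%E) y ->
  (forall z, ((lam * ip (f - T y) (T z))%:E <= J z)%E) /\
  J (y - c) = (lam * ip (f - T y) (T (y - c)))%:E.
Proof.
move=> hmin.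
case: (hJ) => hJ0 hZ hT.
have hqn : forall v, 0 <= ip v v by case: hip.
have hn : forall v : H, `|v| ^+ 2 = ip v v by case: hip.
have hfy : f - T y = - (T y - f) by rewrite opprB.
have [a Ja] : exists a, J (y - c) = a%:E.
  have := hmin c; rewrite /= subrr J0 adde0.
  case: (J (y - c)) (hJ0 (y - c)) => [r| |] //; by exists r.
have part1 : forall z, ((lam * ip (f - T y) (T z))%:E <= J z)%E.
  move=> z.
  case Jz: (J z) (hJ0 z) => [r| |] _ //; last by rewrite leey.
  rewrite lee_fin.
  apply: (@approx_le R _ _ (lam * ip (T z) (T z) / 2)).
    apply: divr_ge0 => //; apply: mulr_ge0; [exact: ltW| exact: hqn].
  move=> t t0 t1.
  have hm := hmin (y + t *: z); rewrite /= Ja in hm.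
  have hJ1 : (J (y + t *: z - c)%R <= (a + t * r)%:E)%E.
    rewrite addrAC. apply: le_trans (hT _ _) _.
    by rewrite Ja hZ Jz -EFinM -EFinD ger0_norm //; lra.
  have := le_trans hm (leeD2l _ hJ1). rewrite -!EFinD lee_fin.
  have -> : T (y + t *: z) - f = (T y - f) + t *: T z
    by rewrite linearD linearZ addrAC.
  rewrite hfy (ipNl hip) (sqnD hip (T y - f)) (ipZr hip) (hn (t *: T z)) (ipZl hip) (ipZr hip).
  move: (ip (T y - f) (T z)) (ip (T z) (T z)) (hqn (T z)) => p q hq.
  nra.
split => //.
rewrite Ja. congr (_%:E). apply/eqP; rewrite eq_le; apply/andP; split; last first.
  by have := part1 (y - c); rewrite Ja lee_fin.
set w := y - c.
apply: (@approx_le R _ _ (lam * ip (T w) (T w) / 2)).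
  apply: divr_ge0 => //; apply: mulr_ge0; [exact: ltW| exact: hqn].
move=> t t0 t1.
have hm := hmin (y - t *: w); rewrite /= Ja in hm.
have hJ1 : J (y - t *: w - c)%R = ((1 - t) * a)%:E.
  have -> : y - t *: w - c = (1 - t) *: w
    by rewrite /w scalerBl scale1r addrAC.
  by rewrite hZ Ja -EFinM ger0_norm //; lra.
move: hm; rewrite hJ1 -!EFinD lee_fin.
have -> : T (y - t *: w) - f = (T y - f) + (- t) *: T w
  by rewrite linearB linearZ addrAC scaleNr.
rewrite hfy (ipNl hip) (sqnD hip (T y - f)) (ipZr hip) (hn (- t *: T w)) (ipZl hip) (ipZr hip).
move: (ip (T y - f) (T w)) (ip (T w) (T w)) (hqn (T w)) => p q hq.
nra.
Qed.

End Core.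

Theorem mainTheorem11 (R : realType) (X H : completeNormedModType R)
  (ip : H -> H -> R) (T : {linear X -> H}) (f : H) (J : X -> \bar R)
  (lam : nat -> R) (x : nat -> X) (k : nat) :
  is_inner_product ip ->
  continuous T ->
  ext_seminorm J ->
  (forall n, 0 < lam n) ->
  (forall n, lam n < lam n.+1) ->
  is_MHDM T f J lam x ->
  is_minimizer (tikhonov T f J (lam k)) (x k) ->
  let u := x k.+1 - x k in
  (* xi = lam_{k+1} T^*(f - T x_{k+1}), as a functional on X:
     <xi, z> = lam_{k+1} <f - T x_{k+1}, T z>_H *)
  let xi := fun z : X => lam k.+1 * ip (f - T (x k.+1)) (T z) in
  is_minimizer (tikhonov T f J (lam k.+1)) (x k.+1) <->
  (J u - J (x k.+1) - (xi (u - x k.+1))%:E = 0)%E.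
Proof.
move=> hip _ hJ hlam _ [_ hM] _ u xi.
have hl := hlam k.+1.
have [A1 A2] := core T f _ hip hJ hl _ (hM k).
have xiB : forall a b, xi (a - b) = xi a - xi b.
  by move=> a b; rewrite /xi linearB (ipDr hip) -[- T b]scaleN1r (ipZr hip); ring.
split.
- move=> hmin.
  have hmin0 : is_minimizer (fun z => ((lam k.+1 / 2 * `|T z - f| ^+ 2)%:E + J (z - 0)%R)%E) (x k.+1).
    by move=> z; rewrite !subr0; apply: hmin.
  have [_ B2] := core T f _ hip hJ hl _ hmin0.
  rewrite subr0 in B2.
  rewrite /u A2 B2 -!EFinB xiB /xi; apply: (congr1 EFin); ring.
- rewrite /u A2 -/xi.
  case Jy: (J (x k.+1)) => [r| |] //.
  rewrite -!EFinB => /eqP; rewrite eqe => /eqP hr.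
  have hr' : r = xi (x k.+1).
    move: hr; rewrite xiB; rewrite /xi; lra.
  move=> z; rewrite /tikhonov [X in (_ + X <= _)%E]Jy.
  apply: le_trans (leeD2l _ (A1 z)).
  rewrite -!EFinD lee_fin hr' /xi.
  have -> : T z - f = (T (x k.+1) - f) + T (z - x k.+1)
    by rewrite linearB addrCA addrAC subrr add0r.
  rewrite (sqnD hip (T (x k.+1) - f)).
  have e : ip (f - T (x k.+1)) (T z) = ip (f - T (x k.+1)) (T (x k.+1))
      - ip (T (x k.+1) - f) (T (z - x k.+1)).
    rewrite linearB (ipDr hip) (ipNr hip) -[T (x k.+1) - f]opprB !(ipNl hip); ring.
  rewrite e.
  have hn0 : 0 <= `|T (z - x k.+1)| ^+ 2 by rewrite exprn_ge0.
  move: hn0; set n := (X in 0 <= X -> _); set p := ip (T (x k.+1) - f) (T (z - x k.+1)) => hn0.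
  nra.
Qed.
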